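(* Let $G$, $P$, $\pi$, $v_{\mathrm{root}}$, $\alpha\in(0,1)$ be as in the context, with $P$ fixed, let $0<\zeta<\frac{1-\alpha}{\alpha}P_{\min}$, $\epsilon>0$, $S=\sum_{a\in\Sigma}(\sum_{e:L(e)=a}P(e))^2$ and $\delta=1-S-\epsilon$. For each prefix length $n'$ let $\mathcal W_{n'}$ be the set of $\zeta$-typical paths defined in the context and let $$P(E_{\mathrm{bad}})=\sum P(\mathbf w)P(\mathbf w'),$$ the sum running over pairs of distinct $\mathbf w,\mathbf w'\in\mathcal W_{n'}$ with $d_H(L(\mathbf w),L(\mathbf w'))/n'<\delta$. Then $$\limsup_{n'\to\infty}\frac{1}{n'}\log P(E_{\mathrm{bad}})\le-\inf_{Q\in A_{\zeta,\delta}}\bigl(2H(P)-H(Q)\bigr)+\mathcal O(\zeta),$$ where the constant in the $\mathcal O$ notation depends only on $P$.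
   Context: $G=(V,E,L)$ is a deterministic, lossless, primitive labeled directed graph over a finite alphabet $\Sigma$; edge $e$ has initial vertex $\sigma(e)$, terminal vertex $\tau(e)$, label $L(e)$. $P$ is a probability mass function on $E$ with $P(e)>0$ for all $e$, stationary: with $\pi(u)=\sum_{e:\sigma(e)=u}P(e)$, $\pi(u)=\sum_{e:\tau(e)=u}P(e)$. Write $p(\tau(e)\mid\sigma(e))=P(e)/\pi(\sigma(e))$. $H(P)=-\sum_eP(e)\log_2\frac{P(e)}{\pi(\sigma(e))}$ and $P_{\min}=\min_eP(e)$. $v_{\mathrm{root}}\in V$ is fixed. $\mathcal W_{n'}$ is the set of paths $\mathbf w=(e_1,\dots,e_{n'})$ in $G$ with $\sigma(e_1)=v_{\mathrm{root}}$ and $|S_{\mathbf w}(e)/n'-P(e)|<\zeta$ for all $e\in E$, where $S_{\mathbf w}(e)=|\{i:e_i=e\}|$; $P(\mathbf w)=\prod_{i=1}^{n'}p(\tau(e_i)\mid\sigma(e_i))$ is the probability that a random walk governed by $P$ from $v_{\mathrm{root}}$ equals $\mathbf w$ (at vertex $u$ the next edge $e$ is chosen with probability $P(e)/\pi(u)$). $d_H$ is Hamming distance between label sequences. (In the paper these prefixes are those of the codewords of $\mathcal C_{\mathrm{pool}}$, and $P(E_{\mathrm{bad}})$ is the mass of bad pairs of codewords.) Product graph $\mathcal G=G\times G$: vertex set $V\times V$, an edge $(e,e')$ from $(\sigma(e),\sigma(e'))$ to $(\tau(e),\tau(e'))$ for each $e,e'\in E$. $\mathcal M_s$ is the set of probability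 measures $Q$ on edges of $\mathcal G$ that are stationary (distribution of initial vertices equals distribution of terminal vertices); $H(Q)=-\sum_{\mathbf e}Q(\mathbf e)\log\frac{Q(\mathbf e)}{Q_1(\sigma(\mathbf e))}$ with $Q_1$ the initial-vertex marginal. $Q_w(e)=\sum_{e'}Q(e,e')$, $Q_{w'}(e')=\sum_eQ(e,e')$, $f(e,e')=\mathbb 1[L(e)\ne L(e')]$, and $A_{\zeta,\delta}=\{Q\in\mathcal M_s:|Q_w(e)-P(e)|<\zeta,\ |Q_{w'}(e)-P(e)|<\zeta\ \forall e\in E,\ \mathbb E_Q[f]\le\delta\}$. *)

(* Defs.v *)
From HB Require Import structures.
From mathcomp Require Import all_boot all_order all_algebra.
From mathcomp Require Import all_classical all_reals all_analysis.
Set Implicit Arguments. Unset Strict Implicit. Unset Printing Implicit Defensive.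
Import Order.TTheory GRing.Theory Num.Theory.
Local Open Scope ring_scope.

Section Defs.
Variables (R : realType) (Sigma V E : finType).
Variables (src tgt : E -> V) (lab : E -> Sigma).

Definition log2 (x : R) : R := ln x / ln 2.

Definition elog2 (x : R) : \bar R := if 0 < x then (log2 x)%:E else -oo%E.

Definition is_path (w : seq E) : bool := sorted (fun e f => tgt e == src f) w.

Definition deterministic : Prop :=
  forall e e', src e = src e' -> lab e = lab e' -> e = e'.

Definition lossless : Prop :=
  forall (e0 e0' : E) (w w' : seq E),
    is_path (e0 :: w) -> is_path (e0' :: w') ->
    src e0 = src e0' -> tgt (last e0 w) = tgt (last e0' w') ->
    map lab (e0 :: w) = map lab (e0' :: w') -> e0 :: w = e0' :: w'.

(* G is primitive: some power of its adjacency matrix is positive, i.e. for some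
   length, every vertex is joined to every vertex by a path of that length *)
Definition primitive : Prop :=
  exists k : nat, forall u v : V, exists (e0 : E) (w : seq E),
    size w = k /\ is_path (e0 :: w) /\ src e0 = u /\ tgt (last e0 w) = v.

Variable P : E -> R.

Definition pi (u : V) : R := \sum_(e : E | src e == u) P e.

Definition stationary_pmf : Prop :=
  (forall e, 0 < P e) /\ (\sum_(e : E) P e = 1) /\
  (forall u : V, \sum_(e : E | src e == u) P e = \sum_(e : E | tgt e == u) P e).

Definition condP (e : E) : R := P e / pi (src e).

Definition HP : R := - \sum_(e : E) P e * log2 (P e / pi (src e)).

Definition Pmin : R := \big[Num.min/1]_(e : E) P e.

Definition Scoll : R := \sum_(a : Sigma) (\sum_(e : E | lab e == a) P e) ^+ 2.

Definition typical (vroot : V) (zeta : R) (n : nat) (w : n.-tuple E) : bool :=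
  [&& is_path w,
      (if val w is e :: _ then src e == vroot else true) &
      [forall e : E, `|(count_mem e w)%:R / n%:R - P e| < zeta]].

Definition Pw (w : seq E) : R := \prod_(e <- w) condP e.

Definition dH (n : nat) (w w' : n.-tuple E) : nat :=
  \sum_(i < n) (lab (tnth w i) != lab (tnth w' i)).

Definition PEbad (vroot : V) (zeta delta : R) (n : nat) : R :=
  \sum_(w : n.-tuple E | typical vroot zeta w)
    \sum_(w' : n.-tuple E | [&& typical vroot zeta w', w' != w &
                               (dH w w')%:R / n%:R < delta])
      Pw w * Pw w'.

(* measures on the edges of the product graph G x G *)
Definition Q1 (Q : E * E -> R) (uu : V * V) : R :=
  \sum_(p : E * E | (src p.1, src p.2) == uu) Q p.

Definition Qin (Q : E * E -> R) (uu : V * V) : R :=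
  \sum_(p : E * E | (tgt p.1, tgt p.2) == uu) Q p.

Definition Ms (Q : E * E -> R) : Prop :=
  (forall p, 0 <= Q p) /\ (\sum_(p : E * E) Q p = 1) /\
  (forall uu : V * V, Q1 Q uu = Qin Q uu).

Definition HQ (Q : E * E -> R) : R :=
  - \sum_(p : E * E)
      (if Q p == 0 then 0 else Q p * log2 (Q p / Q1 Q (src p.1, src p.2))).

Definition Qw (Q : E * E -> R) (e : E) : R := \sum_(e' : E) Q (e, e').
Definition Qw' (Q : E * E -> R) (e' : E) : R := \sum_(e : E) Q (e, e').

Definition EQf (Q : E * E -> R) : R :=
  \sum_(p : E * E) Q p * (lab p.1 != lab p.2)%:R.

Definition A_set (zeta delta : R) : set (E * E -> R) :=
  [set Q | Ms Q /\
     (forall e, `|Qw Q e - P e| < zeta /\ `|Qw' Q e - P e| < zeta) /\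
     EQf Q <= delta].

End Defs.

(* Main.v *)
Require Import Defs.
From HB Require Import structures.
From mathcomp Require Import all_boot all_order all_algebra.
From mathcomp Require Import all_classical all_reals all_analysis.
From mathcomp Require Import ring lra.
Import Order.TTheory GRing.Theory Num.Theory.
Local Open Scope ring_scope.

Set Implicit Arguments. Unset Strict Implicit. Unset Printing Implicit Defensive.

Section Real.
Variable R : realType.

Lemma ln_le_sub1 (x : R) : 0 < x -> ln x <= x - 1.
Proof.
move=> x0; have := expR_ge1Dx (ln x); rewrite lnK ?posrE //; lra.
Qed.

Lemma ln2_gt0 : 0 < ln (2 : R).
Proof. by apply: ln_gt0; lra. Qed.

Lemma logsum2 (a b c d : R) : 0 < a -> 0 < b -> 0 < c -> 0 < d ->
  (a + c) * ln ((a + c) / (b + d)) <= a * ln (a / b) + c * ln (c / d).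
Proof.
move=> a0 b0 c0 d0.
have ac0 : 0 < a + c by lra.
have bd0 : 0 < b + d by lra.
have h1 := @ln_le_sub1 ((a + c) * b / ((b + d) * a)) ltac:(by rewrite !(mulr_gt0, invr_gt0)).
have h2 := @ln_le_sub1 ((a + c) * d / ((b + d) * c)) ltac:(by rewrite !(mulr_gt0, invr_gt0)).
have E1 : ln ((a + c) * b / ((b + d) * a)) = ln ((a + c) / (b + d)) - ln (a / b).
  have -> : (a + c) * b / ((b + d) * a) = ((a + c) / (b + d)) / (a / b).
    by field; apply/and3P; split; apply/eqP; lra.
  by rewrite ln_div // posrE divr_gt0.
have E2 : ln ((a + c) * d / ((b + d) * c)) = ln ((a + c) / (b + d)) - ln (c / d).
  have -> : (a + c) * d / ((b + d) * c) = ((a + c) / (b + d)) / (c / d).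
    by field; apply/and3P; split; apply/eqP; lra.
  by rewrite ln_div // posrE divr_gt0.
rewrite E1 in h1; rewrite E2 in h2.
have h1' := ler_wpM2l (ltW a0) h1.
have h2' := ler_wpM2l (ltW c0) h2.
have Ea : a * ((a + c) * b / ((b + d) * a) - 1) = (a + c) * b / (b + d) - a.
  by field; apply/andP; split; apply/eqP; lra.
have Ec : c * ((a + c) * d / ((b + d) * c) - 1) = (a + c) * d / (b + d) - c.
  by field; apply/andP; split; apply/eqP; lra.
rewrite Ea in h1'; rewrite Ec in h2'.
have Es : (a + c) * b / (b + d) - a + ((a + c) * d / (b + d) - c) = 0.
  by field; apply/eqP; lra.
set L := ln ((a + c) / (b + d)) in h1' h2' *.
set La := ln (a / b) in h1' h2' *. set Lc := ln (c / d) in h1' h2' *.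
have : a * (L - La) + c * (L - Lc) <= 0 by lra.
have -> : a * (L - La) + c * (L - Lc) = (a + c) * L - (a * La + c * Lc) by ring.
lra.
Qed.

End Real.


Section Phi.
Variable R : realType.

Definition phi (a b : R) : R := if a == 0 then 0 else a * log2 (a / b).

Lemma log2_mono (u v : R) : 0 < u -> u <= v -> log2 u <= log2 v.
Proof.
move=> u0 uv; rewrite /log2 ler_pM2r ?invr_gt0 ?ln2_gt0 //.
by rewrite ler_ln // posrE; lra.
Qed.

Lemma phi_sup (a b c d : R) : 0 <= a <= b -> 0 <= c <= d ->
  phi (a + c) (b + d) <= phi a b + phi c d.
Proof.
move=> /andP[a0 ab] /andP[c0 cd]; rewrite /phi.
have [->|an0] := eqVneq a 0.
  rewrite add0r add0r.
  have [ceq|cn0] := eqVneq c 0; first by rewrite lexx.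
  have cp : 0 < c by rewrite lt_def cn0.
  rewrite ?(negbTE cn0) ler_wpM2l //; apply: log2_mono; first by rewrite divr_gt0 //; lra.
  rewrite ler_pdivrMr; last lra.
  rewrite mulrAC ler_pdivlMr; last lra.
  by rewrite ler_pM2l //; lra.
have ap : 0 < a by rewrite lt_def an0.
have [->|cn0] := eqVneq c 0.
  rewrite addr0 addr0 ?(negbTE an0) ler_wpM2l //; apply: log2_mono; first by rewrite divr_gt0 //; lra.
  rewrite ler_pdivrMr; last lra.
  rewrite mulrAC ler_pdivlMr; last lra.
  by rewrite ler_pM2l //; lra.
have cp : 0 < c by rewrite lt_def cn0.
rewrite ?(negbTE an0) ?(negbTE cn0).
have -> : (a + c == 0) = false by apply/negbTE; rewrite gt_eqF //; lra.
have h := @logsum2 R a b c d ap (ltac:(lra) : 0 < b) cp (ltac:(lra) : 0 < d).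
rewrite /log2 !mulrA -mulrDl ler_pM2r ?invr_gt0 ?ln2_gt0 //.
Qed.

Lemma phi_homog (k a b : R) : 0 < k -> phi (k * a) (k * b) = k * phi a b.
Proof.
move=> k0; rewrite /phi mulf_eq0 (gt_eqF k0) /=.
case: (a == 0); first by rewrite mulr0.
have -> : k * a / (k * b) = a / b.
  by rewrite invfM mulrACA divff ?gt_eqF // mul1r.
by rewrite mulrA.
Qed.

Lemma phi_le0 (a b : R) : 0 <= a <= b -> phi a b <= 0.
Proof.
move=> /andP[a0 ab]; rewrite /phi; case: eqVneq => // an0.
have ap : 0 < a by rewrite lt_def an0.
rewrite pmulr_rle0 // /log2 mulrC pmulr_rle0 ?invr_gt0 ?ln2_gt0 //.
by apply: ln_le0; rewrite ler_pdivrMr; lra.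
Qed.

Variables (V E : finType) (src : E -> V).

Lemma HQE (Q : E * E -> R) :
  HQ src Q = - \sum_p phi (Q p) (Q1 src Q (src p.1, src p.2)).
Proof. by []. Qed.

Lemma Q1_lin (a b : R) (X Y : E * E -> R) uu :
  Q1 src (fun p => a * X p + b * Y p) uu = a * Q1 src X uu + b * Q1 src Y uu.
Proof. by rewrite /Q1 big_split /= -!mulr_sumr. Qed.

Lemma Q1_ge (X : E * E -> R) p : (forall q, 0 <= X q) ->
  X p <= Q1 src X (src p.1, src p.2).
Proof.
move=> X0; rewrite /Q1 (bigD1 p) //= lerDl.
by apply: sumr_ge0 => q _; exact: X0.
Qed.

Lemma HQ_ge0 (X : E * E -> R) : (forall q, 0 <= X q) -> 0 <= HQ src X.
Proof.
move=> X0; rewrite HQE oppr_ge0; apply: sumr_le0 => p _.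
apply: phi_le0; apply/andP; split; [exact: X0 | ]. exact: Q1_ge.
Qed.

Lemma HQ_sup (a b : R) (X Y : E * E -> R) : 0 < a -> 0 < b ->
  (forall q, 0 <= X q) -> (forall q, 0 <= Y q) ->
  a * HQ src X + b * HQ src Y <= HQ src (fun p => a * X p + b * Y p).
Proof.
move=> a0 b0 X0 Y0; rewrite !HQE !mulrN -opprD lerN2 !mulr_sumr -big_split /=.
apply: ler_sum => p _; rewrite Q1_lin -!phi_homog //.
apply: phi_sup; apply/andP; split.
- by rewrite mulr_ge0 // ltW.
- by apply: ler_wpM2l; [exact: ltW | exact: Q1_ge].
- by rewrite mulr_ge0 // ltW.
- by apply: ler_wpM2l; [exact: ltW | exact: Q1_ge].
Qed.

End Phi.


Section Comb.
Variable R : realType.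

Lemma sum_seq_count (T : finType) (s : seq T) (f : T -> R) :
  \sum_(x <- s) f x = \sum_(x : T) (count_mem x s)%:R * f x.
Proof.
elim: s => [|y s IH]; first by rewrite big_nil big1 // => x _; rewrite mul0r.
rewrite big_cons IH /=.
under [RHS]eq_bigr do rewrite natrD mulrDl.
rewrite big_split /=; congr (_ + _).
rewrite (bigD1 y) //= eqxx mul1r big1 ?addr0 // => x /negbTE.
by rewrite eq_sym => ->; rewrite mul0r.
Qed.

Lemma prod_expR (T : eqType) (s : seq T) (f : T -> R) :
  (forall x, x \in s -> 0 < f x) ->
  \prod_(x <- s) f x = expR (\sum_(x <- s) ln (f x)).
Proof.
elim: s => [|y s IH] fp; first by rewrite !big_nil expR0.
rewrite !big_cons expRD IH ?lnK ?posrE ?fp ?mem_head // => x xs.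
by rewrite fp // in_cons xs orbT.
Qed.

Lemma tuple_sum (T : finType) n (f : n.+1.-tuple T -> R) :
  \sum_(t : n.+1.-tuple T) f t = \sum_(x : T) \sum_(t : n.-tuple T) f [tuple of x :: t].
Proof.
rewrite (reindex (fun p : T * n.-tuple T => [tuple of p.1 :: p.2])) /=.
  by rewrite pair_big /=.
exists (fun t => (thead t, [tuple of behead t])) => [[x t] _|t _] /=.
  by rewrite theadE; congr (_, _); apply: val_inj.
by rewrite -tuple_eta.
Qed.

Lemma tuple0_sum (T : finType) (f : 0.-tuple T -> R) :
  \sum_(t : 0.-tuple T) f t = f [tuple].
Proof.
rewrite (bigD1 [tuple]) //= big1 ?addr0 // => t /negP[].
by apply/eqP; exact: tuple0.
Qed.

Variables (V E : finType) (src tgt : E -> V).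

Definition startb (v : V) (w : seq E) : bool :=
  if w is f :: _ then src f == v else true.

Lemma is_path_cons e t :
  is_path src tgt (e :: t) = startb (tgt e) t && is_path src tgt t.
Proof. by case: t => //= f t; rewrite eq_sym. Qed.

Lemma path_consE e t :
  path (fun e f : E => tgt e == src f) e t = startb (tgt e) t && is_path src tgt t.
Proof. by case: t => //= f t; rewrite eq_sym. Qed.

Definition pcond n (uu : V * V) (w w' : n.-tuple E) : bool :=
  [&& is_path src tgt w, is_path src tgt w', startb uu.1 w & startb uu.2 w'].

Definition Gp (K : E * E -> R) n uu (w w' : n.-tuple E) : R :=
  if pcond uu w w' then \prod_(p <- zip w w') K p else 0.

Lemma pathsumG (K : E * E -> R) : (forall p, 0 <= K p) ->
  (forall uu : V * V, \sum_(p | (src p.1, src p.2) == uu) K p <= 1) ->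
  forall n uu, \sum_(w : n.-tuple E) \sum_(w' : n.-tuple E) Gp K uu w w' <= 1.
Proof.
move=> K0 K1; elim=> [|n IH] uu.
  rewrite tuple0_sum tuple0_sum /Gp /=.
  by rewrite big_nil.
have -> : \sum_(w : n.+1.-tuple E) \sum_(w' : n.+1.-tuple E) Gp K uu w w' =
   \sum_(x : E) \sum_(y : E) \sum_(t : n.-tuple E) \sum_(t' : n.-tuple E)
      Gp K uu [tuple of x :: t] [tuple of y :: t'].
  rewrite tuple_sum; apply: eq_bigr => x _.
  under eq_bigr do rewrite tuple_sum.
  exact: exchange_big.
apply: (@le_trans _ _ (\sum_(x : E) \sum_(y : E)
   (if (src (x, y).1, src (x, y).2) == uu then K (x, y) else 0))); last first.
  rewrite pair_big /=; apply: le_trans (K1 uu); rewrite [X in _ <= X]big_mkcond /=.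
  by apply: ler_sum => -[x y] _.
apply: ler_sum => x _; apply: ler_sum => y _.
have P1 : forall (z : E) (t : n.-tuple E), is_path src tgt [tuple of z :: t] =
  startb (tgt z) t && is_path src tgt t := fun z t => is_path_cons z t.
have G1 : forall t t' : n.-tuple E, Gp K uu [tuple of x :: t] [tuple of y :: t'] =
   if (src x, src y) == uu then K (x, y) * Gp K (tgt x, tgt y) t t' else 0.
  move=> t t'; rewrite /Gp /pcond !P1 /= big_cons.
  case: ((src x, src y) =P uu) => [<-|neq] /=.
    rewrite !eqxx /=.
    by case: (startb _ t) (is_path _ _ t) (startb _ t') (is_path _ _ t') => [] [] [] [];
       rewrite /= ?mulr0.
  case: ifP => // /and4P[_ _ /eqP a /eqP b].
  by case: neq; rewrite a b; case: (uu).
under eq_bigr do under eq_bigr do rewrite G1.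
case: eqP => _; last by rewrite big1 // => t _; rewrite big1.
under eq_bigr do rewrite -mulr_sumr.
rewrite -mulr_sumr; rewrite -[X in _ <= X]mulr1.
by apply: ler_wpM2l; [exact: K0 | exact: IH].
Qed.

Lemma pathsum (K : E * E -> R) : (forall p, 0 <= K p) ->
  (forall uu : V * V, \sum_(p | (src p.1, src p.2) == uu) K p <= 1) ->
  forall n uu, \sum_(w : n.-tuple E) \sum_(w' : n.-tuple E | pcond uu w w')
     \prod_(p <- zip w w') K p <= 1.
Proof.
move=> K0 K1 n uu; apply: le_trans (pathsumG K0 K1 n uu).
rewrite le_eqVlt; apply/orP; left; apply/eqP/eq_bigr => w _; by rewrite big_mkcond.
Qed.

End Comb.


Section Seqs.
Variable R : realType.

Lemma sum_count_pred (T : finType) (a : pred T) (z : seq T) :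
  \sum_(p | a p) (count_mem p z)%:R = (count a z)%:R :> R.
Proof.
elim: z => [|q z IH]; first by rewrite big1.
rewrite /= natrD -IH.
under eq_bigr do rewrite natrD.
rewrite big_split /=; congr (_ + _).
case aq: (a q).
  rewrite (bigD1 q) //= eqxx big1 ?addr0 // => p /andP[_ /negbTE].
  by rewrite eq_sym => ->.
by rewrite big1 // => p ap; case: eqP => // qp; rewrite qp ap in aq.
Qed.

Lemma sum_count_fst (A B : finType) (z : seq (A * B)) (e : A) :
  \sum_(e' : B) (count_mem (e, e') z)%:R = (count_mem e (unzip1 z))%:R :> R.
Proof.

elim: z => [|q z IH]; first by rewrite big1.
rewrite /= natrD; under eq_bigr do rewrite natrD.
rewrite big_split /= -IH; congr (_ + _).
case: q => a b /=; case: (eqVneq a e) => [->|ne].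
  rewrite (bigD1 b) //= eqxx big1 ?addr0 // => b' /negbTE nb.
  by rewrite xpair_eqE eqxx eq_sym nb.
by rewrite big1 // => b' _; rewrite xpair_eqE (negbTE ne).
Qed.

Lemma sum_count_snd (A B : finType) (z : seq (A * B)) (e' : B) :
  \sum_(e : A) (count_mem (e, e') z)%:R = (count_mem e' (unzip2 z))%:R :> R.
Proof.
elim: z => [|q z IH]; first by rewrite big1.
rewrite /= natrD; under eq_bigr do rewrite natrD.
rewrite big_split /= -IH; congr (_ + _).
case: q => a b /=; case: (eqVneq b e') => [->|ne].
  rewrite (bigD1 a) //= eqxx big1 ?addr0 // => a' /negbTE na.
  by rewrite xpair_eqE eqxx andbT eq_sym na.
by rewrite big1 // => a' _; rewrite xpair_eqE (negbTE ne) andbF.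
Qed.

Lemma tele_cnt (T : Type) (W : eqType) (s t : T -> W) (u : W) (x : T) (z : seq T) :
  path (fun a b => t a == s b) x z ->
  (count (fun a => s a == u) (x :: z))%:R - (count (fun a => t a == u) (x :: z))%:R
  = ((s x == u) : nat)%:R - ((t (last x z) == u) : nat)%:R :> R.
Proof.
elim: z x => [|y z IH] x /=; first by rewrite !addn0.
move=> /andP[/eqP txy pz]; have h := IH y pz; rewrite /= !natrD in h *.
rewrite txy; lra.
Qed.

Lemma last_zip (A B : Type) (x : A) (y : B) (w : seq A) (w' : seq B) :
  size w = size w' -> last (x, y) (zip w w') = (last x w, last y w').
Proof.
elim: w w' x y => [|a w IH] [|b w'] x y //= [] sz; exact: IH.
Qed.

Variables (V E : finType) (src tgt : E -> V).

Lemma zip_path (x y : E) (w w' : seq E) : size w = size w' ->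
  path (fun e f => tgt e == src f) x w -> path (fun e f => tgt e == src f) y w' ->
  path (fun p q : E * E => (tgt p.1, tgt p.2) == (src q.1, src q.2)) (x, y) (zip w w').
Proof.
elim: w w' x y => [|a w IH] [|b w'] x y //= [] sz /andP[xa pa] /andP[yb pb].
by rewrite xpair_eqE xa yb /=; exact: IH.
Qed.

Lemma dH_zip (Sigma : finType) (lab : E -> Sigma) n (w w' : n.-tuple E) :
  dH lab w w' = \sum_(p <- zip w w') (lab p.1 != lab p.2 : nat).
Proof.
have sz : size (zip w w') == n by rewrite size_zip !size_tuple minnn.
have -> : zip w w' = tval (Tuple sz) by [].
rewrite big_tuple /dH; apply: eq_bigr => i _.
case: w w' sz => [s ss] [s' ss'] sz.
have [x0 _] : exists x0 : E, True.
  case: s ss {sz} i => [|x s] ss i; last by exists x.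
  by move: ss => /eqP ss; case: i; rewrite -ss.
rewrite (tnth_nth (x0, x0)) !(tnth_nth x0) /= nth_zip //.
by rewrite (eqP ss) (eqP ss').
Qed.

Lemma Pw_zip (P : E -> R) (w w' : seq E) : size w = size w' ->
  Pw src P w * Pw src P w' = \prod_(p <- zip w w') (condP src P p.1 * condP src P p.2).
Proof.
move=> sz; rewrite big_split /= /Pw.
rewrite -(big_map fst xpredT (condP src P)) -(big_map snd xpredT (condP src P)).
by rewrite -/(unzip1 _) -/(unzip2 _) unzip1_zip ?sz // unzip2_zip ?sz.
Qed.

End Seqs.


Section Diag.
Variables (R : realType) (V E : finType) (src tgt : E -> V) (P : E -> R).

Definition Dg : E * E -> R := fun p => if p.1 == p.2 then P p.1 else 0.

Lemma sum_Dg (C : pred (E * E)) :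
  \sum_(p | C p) Dg p = \sum_(x : E) (if C (x, x) then P x else 0).
Proof.
transitivity (\sum_(x : E) \sum_(y : E) (if C (x, y) then Dg (x, y) else 0)).
  rewrite (pair_bigA _ (fun x y => if C (x, y) then Dg (x, y) else 0)) big_mkcond.
  by apply: eq_bigr => -[x y].
apply: eq_bigr => x _; rewrite (bigD1 x) //= big1 ?addr0 => [|y /negbTE yx].
  by rewrite /Dg /= eqxx.
by rewrite /Dg /= eq_sym yx; case: ifP.
Qed.

Lemma sum_Dg_all : \sum_p Dg p = \sum_x P x.
Proof. by rewrite (sum_Dg xpredT). Qed.

Lemma Qw_Dg e : Qw Dg e = P e.
Proof.
rewrite /Qw (bigD1 e) //= big1 ?addr0 => [|y /negbTE ye]; first by rewrite /Dg /= eqxx.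
by rewrite /Dg /= eq_sym ye.
Qed.

Lemma Qw'_Dg e : Qw' Dg e = P e.
Proof.
rewrite /Qw' (bigD1 e) //= big1 ?addr0 => [|y /negbTE ye]; first by rewrite /Dg /= eqxx.
by rewrite /Dg /= ye.
Qed.

Lemma Dg_ge0 : (forall e, 0 < P e) -> forall p, 0 <= Dg p.
Proof. by move=> P0 p; rewrite /Dg; case: ifP => // _; exact: ltW. Qed.

Lemma Dg_stat : stationary_pmf src tgt P -> forall uu, Q1 src Dg uu = Qin tgt Dg uu.
Proof.
move=> [_ [_ st]] [u1 u2]; rewrite /Q1 /Qin !sum_Dg /=.
case: (eqVneq u1 u2) => [<-|ne].
  have := st u1; rewrite !big_mkcond /= => h.
  transitivity (\sum_(x : E) if src x == u1 then P x else 0).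
    by apply: eq_bigr => x _; rewrite xpair_eqE andbb.
  by rewrite h big_mkcond; apply: eq_bigr => x _; rewrite xpair_eqE andbb.
rewrite big1 ?[RHS]big1 // => x _; rewrite xpair_eqE;
  by case: ifP => // /andP[/eqP a /eqP b]; move: ne; rewrite -a -b eqxx.
Qed.

Lemma EQf_Dg (Sigma : finType) (lab : E -> Sigma) :
  \sum_p Dg p * (lab p.1 != lab p.2)%:R = 0.
Proof.
rewrite big1 // => -[x y] _; rewrite /Dg /=; case: eqP => [->|]; first by rewrite eqxx mulr0.
by rewrite mul0r.
Qed.

End Diag.

Lemma Qin_lin (R : realType) (V E : finType) (tgt : E -> V) (a b : R) (X Y : E * E -> R) uu :
  Qin tgt (fun p => a * X p + b * Y p) uu = a * Qin tgt X uu + b * Qin tgt Y uu.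
Proof. by rewrite /Qin big_split /= -!mulr_sumr. Qed.


Section RA.
Variable R : realType.

Lemma marg_bound (N K1 mu z dd cc p : R) : 0 < N -> 0 < K1 -> 0 < mu -> mu <= z ->
  `|dd| < z -> 0 <= cc <= K1 -> 0 <= p <= 1 ->
  `|mu * (N * dd + cc - K1 * p) / (mu * (N + K1) + K1)| < z.
Proof.
move=> N0 K0 m0 mz dz /andP[c0 cK] /andP[p0 p1].
have den0 : 0 < mu * (N + K1) + K1 by rewrite addr_gt0 // mulr_gt0 // addr_gt0.
rewrite normrM [X in _ * X]gtr0_norm ?invr_gt0 // ltr_pdivrMr // normrM [X in X * _]gtr0_norm //.
have Kp0 : 0 <= K1 * p by rewrite mulr_ge0 // ltW.
have Kp1 : K1 * p <= K1 by rewrite ler_piMr // ltW.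
have h1 : `|N * dd + cc - K1 * p| <= N * `|dd| + K1.
  rewrite -addrA (le_trans (ler_normD _ _)) // normrM gtr0_norm // lerD2l.
  by rewrite ler_norml; apply/andP; split; lra.
have h2 : mu * `|N * dd + cc - K1 * p| <= mu * (N * `|dd| + K1) by rewrite ler_wpM2l // ltW.
have h3 : mu * N * `|dd| < mu * N * z by rewrite ltr_pM2l // mulr_gt0.
have h4 : mu * K1 <= z * K1 by rewrite ler_pM2r.
have h5 : 0 < z * mu * K1 by rewrite !mulr_gt0 // (lt_le_trans m0 mz).
have -> : z * (mu * (N + K1) + K1) = mu * N * z + z * K1 + z * mu * K1 by ring.
rewrite (_ : mu * (N * `|dd| + K1) = mu * N * `|dd| + mu * K1) in h2; last by ring.
lra.
Qed.

Lemma eqf_bound (N K1 mu dl dh x : R) : 0 < N -> 0 < K1 -> 0 < mu -> mu <= dl ->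
  dh / N < dl -> 0 <= x <= K1 ->
  mu * (dh + x) / (mu * (N + K1) + K1) <= dl.
Proof.
move=> N0 K0 m0 md dN /andP[x0 xK].
have den0 : 0 < mu * (N + K1) + K1 by rewrite addr_gt0 // mulr_gt0 // addr_gt0.
rewrite ler_pdivrMr //.
rewrite ltr_pdivrMr // in dN.
have h1 : mu * dh <= mu * (dl * N) by rewrite ler_wpM2l // ltW.
have h2 : mu * x <= mu * K1 by rewrite ler_wpM2l // ltW.
have h3 : mu * K1 <= dl * K1 by rewrite ler_pM2r.
have h4 : 0 <= dl * mu * K1 by rewrite !mulr_ge0 // ltW // (lt_le_trans m0 md).
have -> : dl * (mu * (N + K1) + K1) = mu * (dl * N) + dl * K1 + dl * mu * K1 by ring.
have -> : mu * (dh + x) = mu * dh + mu * x by ring.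
lra.
Qed.

Lemma id_marg (mu N K1 cn cc p : R) : N != 0 -> mu * (N + K1) + K1 != 0 ->
  mu * (N * (cn / N - p) + cc - K1 * p) / (mu * (N + K1) + K1)
  = mu / (mu * (N + K1) + K1) * (cn + cc) + K1 / (mu * (N + K1) + K1) * p - p.
Proof. by move=> h1 h2; field; rewrite h1 h2. Qed.

Lemma id_sum (mu N K1 : R) : mu * (N + K1) + K1 != 0 ->
  mu / (mu * (N + K1) + K1) * (N + K1) + K1 / (mu * (N + K1) + K1) * 1 = 1.
Proof. by move=> h; field. Qed.

End RA.


Section Construct.
Variables (R : realType) (Sigma V E : finType) (src tgt : E -> V) (lab : E -> Sigma) (P : E -> R).
Hypothesis stat : stationary_pmf src tgt P.
Variables (k : nat) (vroot : V) (zeta delta : R).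
Hypothesis hk : forall u v : V, exists (e0 : E) (w : seq E),
    size w = k /\ is_path src tgt (e0 :: w) /\ src e0 = u /\ tgt (last e0 w) = v.
Hypothesis z0 : 0 < zeta.

Definition cnt (z : seq (E * E)) : E * E -> R := fun p => (count_mem p z)%:R.

Lemma cnt_ge0 z p : 0 <= cnt z p.
Proof. exact: ler0n. Qed.

Lemma P_le1 e : P e <= 1.
Proof.
case: stat => P0 [P1 _]; rewrite -P1 (bigD1 e) //= lerDl.
by apply: sumr_ge0 => x _; exact: ltW.
Qed.

Lemma construct n (w w' : n.-tuple E) :
  typical src tgt P vroot zeta w -> typical src tgt P vroot zeta w' -> w' != w ->
  (dH lab w w')%:R / n%:R < delta ->
  exists Q, A_set src tgt lab P zeta delta Q /\
    HQ src (cnt (zip w w')) <= ((n + k.+1)%:R + k.+1%:R / Num.min zeta delta) * HQ src Q.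
Proof.
move=> tw tw' neq dlt.
have n0 : (0 < n)%N.
  case: n w w' tw tw' neq dlt => // w w' _ _ nq _; move: nq; by rewrite (tuple0 w) (tuple0 w') eqxx.
have Npos : 0 < n%:R :> R by rewrite ltr0n.
have dpos : 0 < delta.
  by apply: le_lt_trans dlt; rewrite divr_ge0 // ler0n.
set mu := Num.min zeta delta.
have mu0 : 0 < mu by rewrite lt_min z0 dpos.
have muz : mu <= zeta by rewrite ge_min lexx.
have mud : mu <= delta by rewrite ge_min lexx orbT.
move: tw tw' => /and3P[pw sw /forallP cw] /and3P[pw' sw' /forallP cw'].
have [x [w1 ew]] : exists x w1, val w = x :: w1.
  case: w {pw sw cw neq dlt} => -[|x w1] //= sz; last by exists x, w1.
  by move: sz n0; rewrite /= => /eqP <-.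
have [y [w1' ew']] : exists y w1', val w' = y :: w1'.
  case: w' {pw' sw' cw' neq dlt} => -[|y w1'] //= sz; last by exists y, w1'.
  by move: sz n0; rewrite /= => /eqP <-.
have [e0 [c1 [szc [pc [sc tc]]]]] := hk (tgt (last x w1)) vroot.
have [e0' [c1' [szc' [pc' [sc' tc']]]]] := hk (tgt (last y w1')) vroot.
set C := e0 :: c1. set C' := e0' :: c1'.
have szw : size (val w) = n by rewrite size_tuple.
have szw' : size (val w') = n by rewrite size_tuple.
have szC : size C = k.+1 by rewrite /= szc.
have szC' : size C' = k.+1 by rewrite /= szc'.
set Z := zip (val w ++ C) (val w' ++ C').
have EZ : Z = zip w w' ++ zip C C' by rewrite /Z zip_cat // szw szw'.
have szZ : size Z = (n + k.+1)%N by rewrite size_zip !size_cat szw szw' szC szC' minnn.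
have F1 : cnt Z = (fun p => 1 * cnt (zip w w') p + 1 * cnt (zip C C') p).
  by apply/boolp.funext => p; rewrite /cnt EZ count_cat natrD !mul1r.
have pwx : path (fun e f => tgt e == src f) x w1 by move: pw; rewrite /is_path ew.
have pwy : path (fun e f => tgt e == src f) y w1' by move: pw'; rewrite /is_path ew'.
have pWx : path (fun e f => tgt e == src f) x (w1 ++ C).
  by rewrite cat_path pwx /= sc eqxx; exact: pc.
have pWy : path (fun e f => tgt e == src f) y (w1' ++ C').
  by rewrite cat_path pwy /= sc' eqxx; exact: pc'.
have sz1 : size (w1 ++ C) = size (w1' ++ C').
  move: szw szw'; rewrite ew ew' !size_cat szC szC' /= => a b.
  have : (size w1).+1 = (size w1').+1 by rewrite a b.
  by case => ->.
have ZE : Z = (x, y) :: zip (w1 ++ C) (w1' ++ C') by rewrite /Z ew ew'.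
have sx : src x = vroot by move: sw; rewrite ew => /eqP.
have sy : src y = vroot by move: sw'; rewrite ew' => /eqP.
have F3 : forall uu, Q1 src (cnt Z) uu = Qin tgt (cnt Z) uu.
  move=> uu; rewrite /Q1 /Qin /cnt.
  rewrite (@sum_count_pred R _ (fun p => (src p.1, src p.2) == uu)).
  rewrite (@sum_count_pred R _ (fun p => (tgt p.1, tgt p.2) == uu)).
  apply/eqP; rewrite -subr_eq0; apply/eqP; rewrite ZE.
  rewrite (@tele_cnt R _ _ (fun p => (src p.1, src p.2)) (fun p => (tgt p.1, tgt p.2)) uu (x, y) (zip (w1 ++ C) (w1' ++ C'))).
    rewrite last_zip // !last_cat /= tc tc' sx sy; exact: subrr.
  exact: zip_path.
have [P0 [P1 Pst]] := stat.
set N := n%:R : R. set K1 := k.+1%:R : R.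
have K0 : 0 < K1 by rewrite ltr0n.
have F4 : \sum_p cnt Z p = N + K1.
  rewrite /cnt (@sum_count_pred R _ xpredT Z) count_predT szZ natrD //.
have F5 : forall e, Qw (cnt Z) e = (count_mem e w + count_mem e C)%:R.
  move=> e; rewrite /Qw /cnt (@sum_count_fst R) unzip1_zip ?count_cat //.
  by rewrite !size_cat szw szw' szC szC'.
have F5' : forall e, Qw' (cnt Z) e = (count_mem e w' + count_mem e C')%:R.
  move=> e; rewrite /Qw' /cnt (@sum_count_snd R) unzip2_zip ?count_cat //.
  by rewrite !size_cat szw szw' szC szC'.
set f := fun p : E * E => (lab p.1 != lab p.2)%:R : R.
have F6 : \sum_p cnt Z p * f p = (dH lab w w')%:R + \sum_(p <- zip C C') f p.
  rewrite /cnt -(@sum_seq_count R) EZ big_cat /= dH_zip natr_sum //.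
have xC0 : 0 <= \sum_(p <- zip C C') f p by apply: sumr_ge0 => p _; rewrite /f ler0n.
have xC1 : \sum_(p <- zip C C') f p <= K1.
  apply: (@le_trans _ _ (\sum_(p <- zip C C') 1)).
    by apply: ler_sum => p _; rewrite /f lern1 leq_b1.
  rewrite -[X in X <= _](natr_sum _ _ _ (fun _ => 1%N)) sum1_size size_zip szC szC' minnn //.
set den := mu * (N + K1) + K1.
have den0 : 0 < den by rewrite addr_gt0 // mulr_gt0 // addr_gt0.
pose Q := fun p => (mu / den) * cnt Z p + (K1 / den) * Dg P p.
have a0 : 0 < mu / den by rewrite divr_gt0.
have b0 : 0 < K1 / den by rewrite divr_gt0.
exists Q; split.
  have Qlin : forall (X Y : E * E -> R) (a b : R) e,
      Qw (fun p => a * X p + b * Y p) e = a * Qw X e + b * Qw Y e.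
    by move=> X Y a b e; rewrite /Qw big_split /= -!mulr_sumr.
  have Qlin' : forall (X Y : E * E -> R) (a b : R) e,
      Qw' (fun p => a * X p + b * Y p) e = a * Qw' X e + b * Qw' Y e.
    by move=> X Y a b e; rewrite /Qw' big_split /= -!mulr_sumr.
  have P01 : forall e, 0 <= P e <= 1 by move=> e; rewrite P_le1 ltW.
  have mb : forall (cn cc : nat) e, `|cn%:R / N - P e| < zeta -> (cc <= k.+1)%N ->
      `|mu / den * (cn + cc)%:R + K1 / den * P e - P e| < zeta.
    move=> cn cc e hcw hcc.
    have := @marg_bound R N K1 mu zeta (cn%:R / N - P e) cc%:R (P e) Npos K0 mu0 muz hcw
      ltac:(by rewrite ler0n ler_nat) (P01 e).
    have -> : mu * (N * (cn%:R / N - P e) + cc%:R - K1 * P e) / (mu * (N + K1) + K1)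
            = mu / den * (cn + cc)%:R + K1 / den * P e - P e.
      by rewrite natrD id_marg // ?gt_eqF.
    by [].
  split; [split; [|split]|split].
  - move=> p; apply: addr_ge0; apply: mulr_ge0;
      [exact: ltW | exact: cnt_ge0 | exact: ltW | exact: (Dg_ge0 P0)].
  - rewrite big_split /= -!mulr_sumr F4 sum_Dg_all P1 /den.
    by rewrite id_sum // gt_eqF.
  - by move=> uu; rewrite Q1_lin Qin_lin F3 (Dg_stat stat).
  - move=> e; rewrite Qlin Qlin' F5 F5' !Qw_Dg !Qw'_Dg; split; apply: mb.
    + by have := cw e.
    + by rewrite -szC count_size.
    + by have := cw' e.
    + by rewrite -szC' count_size.
  - rewrite /EQf.
    under eq_bigr do rewrite mulrDl -!mulrA.
    rewrite big_split /= -!mulr_sumr.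
    rewrite (_ : \sum_i Dg P i * (lab i.1 != lab i.2)%:R = 0); last exact: EQf_Dg.
    rewrite !mulr0 addr0 mulrA.
    rewrite (_ : \sum_i cnt Z i * (lab i.1 != lab i.2)%:R = \sum_p cnt Z p * f p) // F6.
    rewrite mulrAC; apply: eqf_bound => //; first by rewrite xC0.
have HZ : HQ src (cnt (zip w w')) <= HQ src (cnt Z).
  rewrite F1; apply: le_trans (HQ_sup src ltr01 ltr01 (@cnt_ge0 _) (@cnt_ge0 _)).
  by rewrite !mul1r lerDl; apply: HQ_ge0; exact: cnt_ge0.
have HQQ := HQ_sup src a0 b0 (@cnt_ge0 Z) (Dg_ge0 P0).
have HD := HQ_ge0 src (Dg_ge0 P0).
apply: (le_trans HZ).
have h : mu / den * HQ src (cnt Z) <= HQ src Q.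
  apply: le_trans HQQ; rewrite lerDl; apply: mulr_ge0 => //; exact: ltW.
have -> : (n + k.+1)%:R + K1 / mu = den / mu.
  by rewrite natrD -/N /den; field; rewrite gt_eqF.
rewrite -(ler_pM2l a0) mulrA (_ : mu / den * (den / mu) = 1) ?mul1r //.
by field; apply/andP; split; rewrite gt_eqF.
Qed.

End Construct.


Section Weight.
Variables (R : realType) (Sigma V E : finType) (src tgt : E -> V) (lab : E -> Sigma) (P : E -> R).
Hypothesis stat : stationary_pmf src tgt P.
Variables (k : nat) (vroot : V) (zeta delta : R).
Hypothesis hk : forall u v : V, exists (e0 : E) (w : seq E),
    size w = k /\ is_path src tgt (e0 :: w) /\ src e0 = u /\ tgt (last e0 w) = v.
Hypothesis z0 : 0 < zeta.

Definition Lc : R := \sum_e - ln (condP src P e).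

Definition KT (T : E * E -> R) (p : E * E) : R := T p / Q1 src T (src p.1, src p.2).

Lemma pi_ge e : P e <= Defs.pi src P (src e).
Proof.
case: stat => P0 _; rewrite /Defs.pi (bigD1 e) //= lerDl.
by apply: sumr_ge0 => x _; exact: ltW.
Qed.

Lemma cP_gt0 e : 0 < condP src P e.
Proof.
case: stat => P0 _; rewrite /condP divr_gt0 //.
exact: lt_le_trans (P0 e) (pi_ge e).
Qed.

Lemma cP_le1 e : condP src P e <= 1.
Proof.
case: stat => P0 _; rewrite /condP ler_pdivrMr ?mul1r ?pi_ge //.
exact: lt_le_trans (P0 e) (pi_ge e).
Qed.

Lemma sumP_lncP : \sum_e P e * ln (condP src P e) = - (ln 2 * HP src P).
Proof.
rewrite /HP mulrN opprK mulr_sumr; apply: eq_bigr => e _.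
have l2 : ln 2 != 0 :> R by rewrite gt_eqF // ln2_gt0.
by rewrite /log2 /condP; field.
Qed.

Lemma sum_lncP n (w : n.-tuple E) : (0 < n)%N ->
  (forall e, `|(count_mem e w)%:R / n%:R - P e| < zeta) ->
  \sum_(e <- w) ln (condP src P e) <= n%:R * (- (ln 2 * HP src P) + zeta * Lc).
Proof.
move=> n0 cw; have N0 : 0 < n%:R :> R by rewrite ltr0n.
rewrite sum_seq_count -sumP_lncP /Lc mulr_sumr mulrDr mulr_sumr mulr_sumr -big_split /=.
apply: ler_sum => e _.
have l0 : ln (condP src P e) <= 0 by apply: ln_le0; exact: cP_le1.
have := cw e; rewrite ltr_norml => /andP[h _].
have h' : n%:R * (P e - zeta) <= (count_mem e w)%:R.
  have : P e - zeta < (count_mem e w)%:R / n%:R by lra.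
  by rewrite ltr_pdivlMr // mulrC => /ltW.
have := ler_wnM2r l0 h'.
have -> : n%:R * (P e - zeta) * ln (condP src P e) =
  n%:R * (P e * ln (condP src P e)) + n%:R * (zeta * - ln (condP src P e)) by ring.
by [].
Qed.

Definition cn n : R := (n + k.+1)%:R + k.+1%:R / Num.min zeta delta.

Definition Bn n x : R := 2 * n%:R * (- (ln 2 * HP src P) + zeta * Lc) +
  ln 2 * (cn n * (x + 2 * HP src P)).

Lemma weight n (w w' : n.-tuple E) x :
  (forall Q, A_set src tgt lab P zeta delta Q -> HQ src Q - 2 * HP src P <= x) ->
  typical src tgt P vroot zeta w -> typical src tgt P vroot zeta w' -> w' != w ->
  (dH lab w w')%:R / n%:R < delta ->
  Pw src P w * Pw src P w' <=
  (\prod_(p <- zip w w') KT (cnt R (zip w w')) p) * expR (Bn n x).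
Proof.
move=> hA tw tw' neq dlt.
have [Q [AQ HQle]] := construct stat hk z0 tw tw' neq dlt.
have hx := hA Q AQ.
have n0 : (0 < n)%N.
  case: n w w' tw tw' neq dlt {HQle} => // w w' _ _ nq _; move: nq; by rewrite (tuple0 w) (tuple0 w') eqxx.
have dpos : 0 < delta by apply: le_lt_trans dlt; rewrite divr_ge0 // ler0n.
have mu0 : 0 < Num.min zeta delta by rewrite lt_min z0 dpos.
have cn0 : 0 <= cn n by rewrite /cn addr_ge0 // divr_ge0 // ltW.
move: (tw) (tw') => /and3P[_ _ /forallP cw] /and3P[_ _ /forallP cw'].
set z := zip w w'.
have szz : size w = size w' by rewrite !size_tuple.
have Kpos : forall p, p \in z -> 0 < KT (cnt R z) p.
  move=> p pz; have c0 : 0 < cnt R z p.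
    by rewrite /cnt ltr0n lt0n; apply/negP => /eqP/count_memPn; rewrite pz.
  rewrite /KT divr_gt0 //; apply: lt_le_trans c0 _; apply: Q1_ge; exact: cnt_ge0.
have cPpos : forall p, p \in z -> 0 < condP src P p.1 * condP src P p.2.
  by move=> p _; rewrite mulr_gt0 // cP_gt0.
rewrite (Pw_zip src P szz) (prod_expR cPpos) (prod_expR Kpos) -expRD ler_expR.
have E1 : \sum_(p <- z) ln (condP src P p.1 * condP src P p.2) =
    \sum_(e <- w) ln (condP src P e) + \sum_(e <- w') ln (condP src P e).
  under eq_bigr do rewrite lnM ?posrE ?cP_gt0 //.
  rewrite big_split /= -(big_map fst xpredT (fun e => ln (condP src P e))).
  rewrite -(big_map snd xpredT (fun e => ln (condP src P e))).
  by rewrite -/(unzip1 _) -/(unzip2 _) unzip1_zip ?szz // unzip2_zip ?szz.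
have E2 : \sum_(p <- z) ln (KT (cnt R z) p) = - (ln 2 * HQ src (cnt R z)).
  rewrite sum_seq_count HQE mulrN opprK mulr_sumr; apply: eq_bigr => p _.
  rewrite /phi /KT /cnt; case: eqP => [->|_]; first by rewrite mul0r mulr0.
  have l2 : ln 2 != 0 :> R by rewrite gt_eqF // ln2_gt0.
  by rewrite /log2; field.
rewrite E1 E2.
have S1 := sum_lncP n0 cw. have S2 := sum_lncP n0 cw'.
have H1 : HQ src (cnt R z) <= cn n * (x + 2 * HP src P).
  apply: (le_trans HQle); rewrite -/(cn n); apply: ler_wpM2l => //; lra.
have H2 : ln 2 * HQ src (cnt R z) <= ln 2 * (cn n * (x + 2 * HP src P)).
  by apply: ler_wpM2l => //; apply: ltW; exact: ln2_gt0.
rewrite /Bn; lra.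
Qed.

End Weight.


Section Types.
Variables (R : realType) (V E : finType) (src tgt : E -> V).

Lemma KT_ge0 (T : E * E -> R) : (forall q, 0 <= T q) -> forall p, 0 <= KT src T p.
Proof.
move=> T0 p; rewrite /KT divr_ge0 //; apply: sumr_ge0 => q _; exact: T0.
Qed.

Lemma KT_sum (T : E * E -> R) : (forall q, 0 <= T q) ->
  forall uu, \sum_(p | (src p.1, src p.2) == uu) KT src T p <= 1.
Proof.
move=> T0 uu.
rewrite (eq_bigr (fun p => T p / Q1 src T uu)); last by move=> p /eqP e; rewrite /KT e.
rewrite -mulr_suml -/(Q1 src T uu).
have [->|ne] := eqVneq (Q1 src T uu) 0; first by rewrite mul0r ler01.
by rewrite divff.
Qed.

Lemma types_bound n (uu : V * V) :
  \sum_(w : n.-tuple E) \sum_(w' : n.-tuple E | pcond src tgt uu w w')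
    \prod_(p <- zip w w') KT src (cnt R (zip w w')) p <= ((n.+1) ^ #|{: E * E}|)%:R.
Proof.
pose tau (w w' : n.-tuple E) : {ffun E * E -> 'I_n.+1} :=
  [ffun p => inord (count_mem p (zip w w'))].
pose tR (t : {ffun E * E -> 'I_n.+1}) : E * E -> R := fun q => ((t q : nat)%:R).
have tR0 : forall t q, 0 <= tR t q by move=> t q; rewrite /tR ler0n.
have eqT : forall w w' : n.-tuple E, cnt R (zip w w') = tR (tau w w').
  move=> w w'; apply/boolp.funext => q; rewrite /tR /tau ffunE inordK //.
  rewrite ltnS (leq_trans (count_size _ _)) // size_zip !size_tuple minnn //.
apply: (@le_trans _ _ (\sum_(t : {ffun E * E -> 'I_n.+1}) \sum_(w : n.-tuple E)
   \sum_(w' : n.-tuple E | pcond src tgt uu w w') \prod_(p <- zip w w') KT src (tR t) p)).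
  rewrite exchange_big /=; apply: ler_sum => w _.
  rewrite exchange_big /=; apply: ler_sum => w' _.
  rewrite eqT (bigD1 (tau w w')) //= lerDl.
  apply: sumr_ge0 => t _; apply: prodr_ge0 => p _; exact: KT_ge0.
apply: (@le_trans _ _ (\sum_(t : {ffun E * E -> 'I_n.+1}) 1)).
  apply: ler_sum => t _; apply: pathsum; [exact: KT_ge0 | exact: KT_sum].
by rewrite sumr_const card_ffun card_ord.
Qed.

End Types.


Lemma limsup_le (R : realType) (u : nat -> \bar R) (y : R) :
  (forall eps : R, 0 < eps -> exists N, forall n, (N <= n)%N -> (u n <= (y + eps)%:E)%E) ->
  (limn_esup u <= y%:E)%E.
Proof.
move=> H; apply/lee_addgt0Pr => e e0; have [N hN] := H e e0.
rewrite limn_esup_lim; apply: lime_le; first exact: is_cvg_esups.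
exists N => // m /= Nm; apply: ge_ereal_sup => _ [j /= mj <-].
by rewrite -EFinD; apply: hN; exact: leq_trans mj.
Qed.

Section Final.
Variables (R : realType) (Sigma V E : finType) (src tgt : E -> V) (lab : E -> Sigma) (P : E -> R).
Hypothesis stat : stationary_pmf src tgt P.
Variables (k : nat) (vroot : V) (zeta delta : R).
Hypothesis hk : forall u v : V, exists (e0 : E) (w : seq E),
    size w = k /\ is_path src tgt (e0 :: w) /\ src e0 = u /\ tgt (last e0 w) = v.
Hypothesis z0 : 0 < zeta.
Variable x : R.
Hypothesis hA : forall Q, A_set src tgt lab P zeta delta Q -> HQ src Q - 2 * HP src P <= x.

Definition Tn n : R := ((n.+1) ^ #|{: E * E}|)%:R.

Lemma Pw_ge0 w : 0 <= Pw src P w.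
Proof. by apply: prodr_ge0 => e _; apply: ltW; exact: (cP_gt0 stat). Qed.

Lemma PEbad_bound n :
  PEbad src tgt lab P vroot zeta delta n <= expR (Bn src P k zeta delta n x) * Tn n.
Proof.
rewrite /PEbad.
set e := expR _.
apply: (@le_trans _ _ (\sum_(w : n.-tuple E | typical src tgt P vroot zeta w)
   \sum_(w' : n.-tuple E | [&& typical src tgt P vroot zeta w', w' != w &
                               (dH lab w w')%:R / n%:R < delta])
   (\prod_(p <- zip w w') KT src (cnt R (zip w w')) p) * e)).
  apply: ler_sum => w tw; apply: ler_sum => w' /and3P[tw' ne dl].
  exact: (weight stat hk z0 hA tw tw' ne dl).
have M0 : forall w w' : n.-tuple E, 0 <= \prod_(p <- zip w w') KT src (cnt R (zip w w')) p.
  by move=> w w'; apply: prodr_ge0 => p _; apply: KT_ge0 => q; exact: cnt_ge0.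
apply: (@le_trans _ _ (\sum_(w : n.-tuple E) \sum_(w' : n.-tuple E |
     pcond src tgt (vroot, vroot) w w')
   (\prod_(p <- zip w w') KT src (cnt R (zip w w')) p) * e)).
  rewrite [leLHS]big_mkcond; apply: ler_sum => w _.
  case: ifP => tw; last first.
    by apply: sumr_ge0 => w' _; apply: mulr_ge0 => //; exact: expR_ge0.
  rewrite [leLHS]big_mkcond [leRHS]big_mkcond; apply: ler_sum => w' _.
  case: ifP => [/and3P[tw' _ _]|_].
    rewrite ifT //; move: tw tw' => /and3P[p1 s1 _] /and3P[p2 s2 _].
    by rewrite /pcond p1 p2 /=; apply/andP; split.
  by case: ifP => // _; apply: mulr_ge0 => //; exact: expR_ge0.
under eq_bigr do rewrite -mulr_suml.
rewrite -mulr_suml mulrC; apply: ler_wpM2l; first exact: expR_ge0.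
exact: types_bound.
Qed.

End Final.


Section Asym.
Variable R : realType.

Lemma bound_nat (c : R) : exists N, forall n, (N <= n)%N -> c < n%:R.
Proof.
exists (Num.Def.archi_bound `|c|) => n hn.
apply: (le_lt_trans (ler_norm c)); apply: (lt_le_trans (archi_boundP (normr_ge0 c))).
by rewrite ler_nat.
Qed.

Lemma ln_small (eta : R) : 0 < eta ->
  exists N, forall n, (N <= n)%N -> ln ((n.+1)%:R : R) <= eta * n%:R.
Proof.
move=> e0; have [N hN] := bound_nat (2 / eta ^+ 2).
exists (maxn 1 N) => n; rewrite geq_max => /andP[n1 nN].
have hn := hN n nN.
have npos : 0 < n%:R :> R by rewrite ltr0n.
set y := ln (n.+1)%:R.
have y0 : 0 <= y by apply: ln_ge0; rewrite ler1n.
have h1 : y ^+ 2 <= 2 * n%:R.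
  have := expR_ge1Dxn 1 y0; rewrite /y lnK ?posrE ?ltr0n // -/y => h.
  have nS : (n.+1)%:R = n%:R + 1 :> R by rewrite -natr1.
  rewrite nS in h.
  have h' : y ^+ 2 / (2`!)%:R <= n%:R by lra.
  by move: h'; rewrite ler_pdivrMr ?ltr0n // mulrC.
have h2 : 2 <= eta ^+ 2 * n%:R.
  by rewrite -ler_pdivrMl ?exprn_gt0 // mulrC; apply: ltW.
rewrite leNgt; apply/negP => hlt.
have hge : 0 <= eta * n%:R by apply: mulr_ge0; apply: ltW.
have h3 := ltr_pM hge hge hlt hlt.
have h4 : 2 * n%:R <= eta ^+ 2 * n%:R * n%:R by rewrite ler_pM2r.
rewrite (_ : (eta * n%:R) * (eta * n%:R) = eta ^+ 2 * n%:R * n%:R) in h3; last by ring.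
have h5 : y * y <= 2 * n%:R by rewrite -expr2.
have h6 : n%:R <= n%:R * n%:R :> R.
  by rewrite ler_peMr // ?ler1n // ltW.
lra.
Qed.

Lemma r_small (A0 F l2 : R) : 0 <= F -> 0 < l2 -> forall eps, 0 < eps ->
  exists N, forall n, (N <= n)%N -> (A0 + ln ((n.+1)%:R : R) * F / l2) / n%:R <= eps.
Proof.
move=> F0 l0 eps e0.
set G := F / l2.
have G0 : 0 <= G by rewrite divr_ge0 // ltW.
set eta := eps / (2 * (G + 1)).
have eta0 : 0 < eta by rewrite divr_gt0 // mulr_gt0 //; lra.
have etaG : eta * G <= eps / 2.
  rewrite /eta mulrAC ler_pdivrMr; last by rewrite mulr_gt0 //; lra.
  have -> : eps / 2 * (2 * (G + 1)) = eps * G + eps by field.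
  lra.
have [N1 hN1] := ln_small eta0.
have [N2 hN2] := bound_nat (2 * `|A0| / eps).
exists (maxn 1 (maxn N1 N2)) => n; rewrite !geq_max => /and3P[n1 nN1 nN2].
have npos : 0 < n%:R :> R by rewrite ltr0n.
rewrite ler_pdivrMr // -mulrA -/G.
have hy := hN1 n nN1.
have hA := hN2 n nN2.
have h1 : ln (n.+1)%:R * G <= eta * n%:R * G by rewrite ler_wpM2r.
have h2 : eta * n%:R * G <= eps / 2 * n%:R.
  by rewrite mulrAC ler_wpM2r // ltW.
have h3 : 2 * `|A0| < eps * n%:R by rewrite -ltr_pdivrMl // mulrC.
have h4 := ler_norm A0.
rewrite (_ : eps / 2 * n%:R = (eps * n%:R) / 2) in h2; last by rewrite mulrAC.
lra.
Qed.

End Asym.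


Lemma id_un (R : realType) (N l2 H L z x K1 c1 y F : R) : N != 0 -> l2 != 0 ->
  N^-1 * ((2 * N * (-(l2 * H) + z * L) + l2 * ((N + K1 + c1) * (x + 2 * H)) + y * F) / l2)
  = x + 2 * L / l2 * z + ((K1 + c1) * (x + 2 * H) + y * F / l2) / N.
Proof. by move=> h1 h2; field; rewrite h1 h2. Qed.

Section Core.
Variables (R : realType) (Sigma V E : finType) (src tgt : E -> V) (lab : E -> Sigma) (P : E -> R).
Hypothesis stat : stationary_pmf src tgt P.
Variables (k : nat) (vroot : V) (zeta delta : R).
Hypothesis hk : forall u v : V, exists (e0 : E) (w : seq E),
    size w = k /\ is_path src tgt (e0 :: w) /\ src e0 = u /\ tgt (last e0 w) = v.
Hypothesis z0 : 0 < zeta.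

Lemma un_bound x n :
  (forall Q, A_set src tgt lab P zeta delta Q -> HQ src Q - 2 * HP src P <= x) ->
  (0 < n)%N ->
  (((n%:R)^-1)%:E * elog2 (PEbad src tgt lab P vroot zeta delta n) <=
   ((n%:R)^-1 * ((Bn src P k zeta delta n x + ln (Tn R E n)) / ln 2))%:E)%E.
Proof.
move=> hA n0; rewrite /elog2; case: ifP => [pos|_]; last first.
  by rewrite mulrNy gtr0_sg ?invr_gt0 ?ltr0n // mul1e leNye.
rewrite -EFinM lee_fin; apply: ler_wpM2l; first by rewrite invr_ge0 ler0n.
rewrite /log2 ler_pM2r ?invr_gt0 ?(ln2_gt0 R) //.
have T0 : 0 < Tn R E n by rewrite /Tn ltr0n expn_gt0.
have := PEbad_bound stat vroot hk z0 hA n => hb.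
rewrite -[X in _ <= X + _](expRK) -lnM ?posrE ?expR_gt0 //.
by rewrite ler_ln // posrE mulr_gt0 // expR_gt0.
Qed.

Lemma core x :
  (forall Q, A_set src tgt lab P zeta delta Q -> HQ src Q - 2 * HP src P <= x) ->
  (limn_esup (fun n : nat =>
        ((n%:R)^-1)%:E * elog2 (PEbad src tgt lab P vroot zeta delta n))
     <= (x + (2 * Lc src P / ln 2) * zeta)%:E)%E.
Proof.
move=> hA; apply: limsup_le => eps e0.
set K1 := k.+1%:R : R. set c1 := K1 / Num.min zeta delta.
have [N hN] := @r_small R ((K1 + c1) * (x + 2 * HP src P)) (#|{: E * E}|%:R) (ln 2)
   (ler0n _ _) (ln2_gt0 R) eps e0.
exists (maxn 1 N) => n; rewrite geq_max => /andP[n1 nN].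
apply: le_trans (un_bound hA n1) _; rewrite lee_fin.
have -> : ln (Tn R E n) = ln ((n.+1)%:R : R) * #|{: E * E}|%:R.
  by rewrite /Tn natrX lnXn ?ltr0n // mulr_natr.
rewrite /Bn /cn natrD -/K1 -/c1 id_un; last 2 first.
- by rewrite pnatr_eq0 -lt0n.
- by rewrite gt_eqF // (ln2_gt0 R).
have := hN n nN; lra.
Qed.

End Core.


Unset Implicit Arguments. Set Strict Implicit. Set Printing Implicit Defensive.
Local Open Scope classical_set_scope.

Theorem lemma3 (R : realType) (Sigma V E : finType)
  (src tgt : E -> V) (lab : E -> Sigma) (P : E -> R) :
  deterministic src lab ->
  lossless src tgt lab ->
  primitive src tgt ->
  stationary_pmf src tgt P ->
  exists C : R, forall (vroot : V) (alpha zeta eps : R),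
    0 < alpha < 1 ->
    0 < zeta -> zeta < (1 - alpha) / alpha * Pmin P ->
    0 < eps ->
    let delta := 1 - Scoll lab P - eps in
    (limn_esup (fun n : nat =>
        ((n%:R)^-1)%:E * elog2 (PEbad src tgt lab P vroot zeta delta n))
     <= - ereal_inf [set (2 * HP src P - HQ src Q)%:E | Q in A_set src tgt lab P zeta delta]
        + (C * zeta)%:E)%E.
Proof.
move=> _ _ [k hk] stat.
exists (2 * Lc src P / ln 2).
move=> vroot alpha zeta eps _ z0 _ _; cbv zeta; set delta := 1 - Scoll lab P - eps.
set S := [set _ | _ in _].
set u := limn_esup _.
have lb : forall Q, A_set src tgt lab P zeta delta Q ->
    (ereal_inf S <= (2 * HP src P - HQ src Q)%:E)%E.
  by move=> Q AQ; apply: ereal_inf_lbound; exists Q.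
case Einf: (ereal_inf S) => [r| |].
- have hA : forall Q, A_set src tgt lab P zeta delta Q -> HQ src Q - 2 * HP src P <= - r.
    move=> Q AQ; have := lb Q AQ; rewrite Einf lee_fin => h.
    by rewrite -opprB lerN2.
  by rewrite -EFinN -EFinD; exact: (core stat vroot hk z0 hA).
- have A0 : forall Q, ~ A_set src tgt lab P zeta delta Q.
    by move=> Q AQ; have := lb Q AQ; rewrite Einf leye_eq.
  have hA : forall x Q, A_set src tgt lab P zeta delta Q -> HQ src Q - 2 * HP src P <= x.
    by move=> x Q AQ; case: (A0 Q AQ).
  have hu : forall x : R, (u <= x%:E)%E.
    move=> x; have := core stat vroot hk z0 (hA (x - 2 * Lc src P / ln 2 * zeta)).
    by rewrite subrK.
  rewrite /= addNye; case: u hu => [r| |] hu //.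
  + have := hu (r - 1)%R; rewrite lee_fin => h; exfalso; lra.
  + by have := hu 0%R.
- by rewrite /= addye // leey.
Qed.
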